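(* Let $R$ be a valuation domain, $J/A$ a type with $J=\bigcup_{\nu<\omega_1} r_\nu^{-1}R$ as in the context, and let $\delta<\omega_1$ be a limit ordinal such that $R/\bigcap_{\nu<\delta} r_\nu A$ is not complete. Suppose $\{e^\tau_\sigma:\sigma<\tau<\delta\}\subseteq R^*$ satisfies $e^\rho_\tau e^\tau_\sigma-e^\rho_\sigma\in r_\sigma A$ for all $\sigma<\tau<\rho<\delta$. Then there are units $e^\delta_{\sigma,j}\in R^*$ ($\sigma<\delta$, $j\in\{0,1\}$) such that $e^\delta_{\tau,j}e^\tau_\sigma-e^\delta_{\sigma,j}\in r_\sigma A$ for all $\sigma<\tau<\delta$ and $j\in\{0,1\}$, but there is no family of units $\{c_\sigma:\sigma<\delta\}$ together with units $c_{\delta,0},c_{\delta,1}\in R^*$ such that $c_\tau-e^\tau_\sigma c_\sigma\in r_\sigma A$ for all $\sigma<\tau<\delta$ and $c_{\delta,j}-e^\delta_{\sigma,j}c_\sigma\in r_\sigma A$ for all $\sigma<\delta$ and $j\in\{0,1\}$.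
   Context: $R$ is a valuation domain with quotient field $Q\neq R$ and unit group $R^*$. $A\subseteq J$ are $R$-submodules of $Q$ with $J=\bigcup_{\nu<\omega_1} r_\nu^{-1}R$, $r_\nu\in R\setminus\{0\}$, $r_\mu\mid r_\nu$ for $\mu<\nu$. $R/\bigcap_{\nu<\delta} r_\nu A$ carries the linear topology with basic neighborhoods of $0$ the images of $r_\nu A$ ($\nu<\delta$); complete means every Cauchy sequence converges. *)

(* Defs.v *)
From HB Require Import structures.
From mathcomp Require Import all_boot all_order all_algebra fraction.
Set Implicit Arguments. Unset Strict Implicit. Unset Printing Implicit Defensive.
Import Order.TTheory GRing.Theory Num.Theory.
Local Open Scope ring_scope.

Definition emb (R : idomainType) (x : R) : {fraction R} := @FracField.tofrac R x.

Definition dvdR (R : idomainType) (a b : R) : Prop := exists c : R, b = c * a.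

Definition valuation_domain (R : idomainType) : Prop :=
  forall a b : R, dvdR a b \/ dvdR b a.

Definition is_Rsubmodule (R : idomainType) (M : {fraction R} -> Prop) : Prop :=
  M 0 /\ (forall x y, M x -> M y -> M (x + y)) /\
  (forall (r : R) x, M x -> M (emb r * x)).

Definition smul (R : idomainType) (r : R) (M : {fraction R} -> Prop)
  : {fraction R} -> Prop :=
  fun x => exists a, M a /\ x = emb r * a.

(* (O, lt) is a well-order of order type omega_1: a strict total
   well-founded order, every initial segment is countable, and O itself is
   uncountable. Any two such orders are isomorphic to omega_1. *)
Definition omega1_order (O : Type) (lt : O -> O -> Prop) : Prop :=
  (forall x, ~ lt x x) /\
  (forall x y z, lt x y -> lt y z -> lt x z) /\
  (forall x y, lt x y \/ x = y \/ lt y x) /\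
  well_founded lt /\
  (forall a : O, exists f : {x : O | lt x a} -> nat, forall u v, f u = f v -> u = v) /\
  ~ (exists f : O -> nat, forall u v, f u = f v -> u = v).

Definition limit_ord (O : Type) (lt : O -> O -> Prop) (d : O) : Prop :=
  (exists s, lt s d) /\ (forall s, lt s d -> exists t, lt s t /\ lt t d).

(* Completeness of R / (bigcap_{nu<delta} r_nu A) in the linear topology whose
   basic neighbourhoods of 0 are the images of r_nu A (nu < delta), phrased on
   representatives in R. *)
Definition cauchy_seq (R : idomainType) (O : Type) (lt : O -> O -> Prop)
  (d : O) (r : O -> R) (A : {fraction R} -> Prop) (x : nat -> R) : Prop :=
  forall nu, lt nu d -> exists N : nat, forall n m : nat, (N <= n)%N -> (N <= m)%N ->
    smul (r nu) A (emb (x n - x m)).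

Definition converges_to (R : idomainType) (O : Type) (lt : O -> O -> Prop)
  (d : O) (r : O -> R) (A : {fraction R} -> Prop) (x : nat -> R) (l : R) : Prop :=
  forall nu, lt nu d -> exists N : nat, forall n : nat, (N <= n)%N ->
    smul (r nu) A (emb (x n - l)).

Definition complete_quot (R : idomainType) (O : Type) (lt : O -> O -> Prop)
  (d : O) (r : O -> R) (A : {fraction R} -> Prop) : Prop :=
  forall x : nat -> R, cauchy_seq lt d r A x -> exists l : R, converges_to lt d r A x l.

(* Main.v *)
Require Import Defs.
From HB Require Import structures.
From mathcomp Require Import all_boot all_order all_algebra fraction ring.
From Stdlib Require Import Classical ClassicalEpsilon.
Import GRing.Theory.
Set Implicit Arguments. Unset Strict Implicit.
Local Open Scope ring_scope.

Definition Ism (R : idomainType) (r : R) (A : {fraction R} -> Prop) (x : R) :=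
  smul r A (emb x).

Lemma Ism0 (R : idomainType) (r : R) A : is_Rsubmodule A -> Ism r A 0.
Proof. case=> A0 _; exists 0; split => //; by rewrite /emb rmorph0 mulr0. Qed.

Lemma IsmD (R : idomainType) (r : R) A x y : is_Rsubmodule A ->
  Ism r A x -> Ism r A y -> Ism r A (x + y).
Proof.
rewrite /Ism; case=> _ [AD _] [a [Aa Ha]] [b [Ab Hb]]; exists (a + b); split; first exact: AD.
have -> : emb (x + y) = emb x + emb y by rewrite /emb rmorphD.
by rewrite Ha Hb mulrDr.
Qed.

Lemma IsmM (R : idomainType) (r : R) A c x : is_Rsubmodule A ->
  Ism r A x -> Ism r A (c * x).
Proof.
rewrite /Ism; case=> _ [_ AM] [a [Aa Ha]]; exists (emb c * a); split; first exact: AM.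
have -> : emb (c * x) = emb c * emb x by rewrite /emb rmorphM.
by rewrite Ha mulrCA.
Qed.

Lemma IsmN (R : idomainType) (r : R) A x : is_Rsubmodule A ->
  Ism r A x -> Ism r A (- x).
Proof. move=> hA h; rewrite -mulN1r; exact: IsmM. Qed.

Lemma IsmB (R : idomainType) (r : R) A x y : is_Rsubmodule A ->
  Ism r A x -> Ism r A y -> Ism r A (x - y).
Proof. move=> hA hx hy; apply: IsmD => //; exact: IsmN. Qed.

Lemma Ism_dvd (R : idomainType) (r1 r2 : R) A x : is_Rsubmodule A ->
  dvdR r1 r2 -> Ism r2 A x -> Ism r1 A x.
Proof.
rewrite /Ism; case=> _ [_ AM] [c ->] [a [Aa Ha]]; exists (emb c * a); split; first exact: AM.
by rewrite Ha /emb rmorphM -mulrA mulrCA.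
Qed.

Lemma nonunitD (R : idomainType) (a b : R) : valuation_domain R ->
  a \isn't a GRing.unit -> b \isn't a GRing.unit -> (a + b) \isn't a GRing.unit.
Proof.
move=> V ha hb; case: (V a b) => [[c ->]|[c ->]].
- by rewrite -{1}[a]mul1r -mulrDl unitrM negb_and ha orbT.
- by rewrite -{2}[b]mul1r -mulrDl unitrM negb_and hb orbT.
Qed.

Lemma unit_shift (R : idomainType) (y z : R) : valuation_domain R ->
  y \is a GRing.unit -> z - y \isn't a GRing.unit -> z \is a GRing.unit.
Proof.
move=> V hy hzy; apply/negPn/negP => hz.
have := nonunitD V hz (b := - (z - y)); rewrite unitrN => /(_ hzy).
by rewrite opprB addrC subrK hy.
Qed.

Lemma unit_or_1 (R : idomainType) (y : R) : valuation_domain R ->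
  y \is a GRing.unit \/ (1 + y) \is a GRing.unit.
Proof.
move=> V; case hy: (y \is a GRing.unit); [by left| right].
apply/negPn/negP => h.
have := nonunitD V h (b := - y); rewrite unitrN hy => /(_ isT).
by rewrite addrK unitr1.
Qed.

Lemma choice_fun (T : Type) (P : T -> nat -> Prop) :
  (forall a, exists n, P a n) -> exists g, forall a, P a (g a).
Proof.
move=> h; exists (fun a => proj1_sig (constructive_indefinite_description _ (h a))).
by move=> a; case: (constructive_indefinite_description _ _).
Qed.
Lemma cofinal (O : Type) (lt : O -> O -> Prop) (d : O) :
  omega1_order lt -> limit_ord lt d ->
  exists rho : nat -> O, (forall n, lt (rho n) d) /\ (forall n, lt (rho n) (rho n.+1)) /\
    (forall s, lt s d -> exists n, lt s (rho n)).
Proof.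
move=> [irr [tr [tot [wf [cnt _]]]]] [[s0 hs0] lim].
have [f finj] := cnt d.
have step : forall (p : {p | lt p d}) (n : nat), {t : {p | lt p d} |
   lt (proj1_sig p) (proj1_sig t) /\
   forall x (hx : lt x d), f (exist _ x hx) = n -> lt x (proj1_sig t)}.
  move=> [p hp] n; apply: constructive_indefinite_description.
  case: (classic (exists x (hx : lt x d), f (exist _ x hx) = n)).
  - move=> [x [hx fx]].
    have [m [hm1 [hm2 hm3]]] : exists m, lt m d /\ (p = m \/ lt p m) /\ (x = m \/ lt x m).
      case: (tot p x) => [h|[h|h]].
      + by exists x; split => //; split; [right|left].
      + by exists x; subst; split => //; split; left.
      + by exists p; split => //; split; [left|right].
    have [t [mt td]] := lim m hm1.
    exists (exist _ t td) => /=; split.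
      by case: hm2 => [->//|h]; apply: tr h mt.
    move=> y hy fy.
    have e : exist (fun x => lt x d) y hy = exist _ x hx by apply: finj; rewrite fy fx.
    have -> : y = x by move: e => [].
    by case: hm3 => [->//|h]; apply: tr h mt.
  - move=> hno; have [t [pt td]] := lim p hp.
    exists (exist _ t td); split => // x hx fx; exfalso; apply: hno; by exists x, hx.
pose rho := fix g (n : nat) : {p | lt p d} :=
  match n with 0 => exist _ s0 hs0 | m.+1 => proj1_sig (step (g m) m) end.
exists (fun n => proj1_sig (rho n)); split; first by move=> n; case: (rho n).
split.
  by move=> n; rewrite /=; case: (step (rho n) n) => t [].
move=> s hs; exists (f (exist _ s hs)).+1 => /=.
exact: (proj2 (proj2_sig (step (rho (f (exist _ s hs))) (f (exist _ s hs)))) s hs erefl).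
Qed.

Lemma extension (R : idomainType) (O : Type) (lt : O -> O -> Prop)
  (A : {fraction R} -> Prop) (r : O -> R) (d : O) (e : O -> O -> R) :
  is_Rsubmodule A -> omega1_order lt -> limit_ord lt d ->
  (forall mu nu, lt mu nu -> dvdR (r mu) (r nu)) ->
  (forall s t, lt s t -> lt t d -> e t s \is a GRing.unit) ->
  (forall s t p, lt s t -> lt t p -> lt p d ->
     smul (r s) A (emb (e p t * e t s - e p s))) ->
  exists ed0 : O -> R, (forall s, lt s d -> ed0 s \is a GRing.unit) /\
    (forall s t, lt s t -> lt t d -> Ism (r s) A (ed0 t * e t s - ed0 s)).
Proof.
move=> hA o1 lim dv eU coh.
have tr : forall x y z, lt x y -> lt y z -> lt x z by case: o1 => _ [].
have [rho [rd [rinc rcof]]] := cofinal o1 lim.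
have rmon : forall s n k, lt s (rho n) -> lt s (rho (n + k)%N).
  move=> s n k h; elim: k => [|k IH]; first by rewrite addn0.
  by rewrite addnS; apply: tr IH (rinc _).
have rmon' : forall s n m, (n <= m)%N -> lt s (rho n) -> lt s (rho m).
  by move=> s n m nm h; rewrite -(subnKC nm); apply: rmon.
pose E := fix E (n : nat) : R :=
  match n with 0 => 1 | m.+1 => E m * (e (rho m.+1) (rho m))^-1 end.
have EU : forall n, E n \is a GRing.unit.
  elim => [|n IH] /=; first exact: unitr1.
  by rewrite unitrM IH unitrV eU.
have key : forall s n k, lt s (rho n) ->
    Ism (r s) A (E (n + k)%N * e (rho (n + k)%N) s - E n * e (rho n) s).
  move=> s n k hs; elim: k => [|k IH].
    by rewrite addn0 subrr; apply: Ism0.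
  rewrite addnS.
  set m := (n + k)%N in IH *.
  have hsm : lt s (rho m) by apply: rmon.
  have u := eU _ _ (rinc m) (rd _).
  have -> : E m.+1 * e (rho m.+1) s - E n * e (rho n) s =
     (E m * (e (rho m.+1) (rho m))^-1) * (- (e (rho m.+1) (rho m) * e (rho m) s - e (rho m.+1) s))
     + (E m * e (rho m) s - E n * e (rho n) s).
    have H : E m * (e (rho m.+1) (rho m))^-1 * (e (rho m.+1) (rho m) * e (rho m) s) = E m * e (rho m) s.
      by rewrite mulrA -(mulrA (E m)) mulVr // mulr1.
    rewrite /= opprB mulrBr H; ring.
  apply: IsmD => //; apply: IsmM => //; apply: IsmN => //.
  exact: coh hsm (rinc m) (rd _).
have key' : forall s n m, (n <= m)%N -> lt s (rho n) ->
    Ism (r s) A (E m * e (rho m) s - E n * e (rho n) s).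
  by move=> s n m nm h; rewrite -(subnKC nm); apply: key.
have : forall s, exists n, lt s d -> lt s (rho n).
  move=> s; case: (classic (lt s d)) => h.
    by have [n hn] := rcof s h; exists n.
  by exists 0%N.
move=> /choice_fun [nn hnn].
exists (fun s => E (nn s) * e (rho (nn s)) s); split.
  by move=> s hs; rewrite unitrM EU eU //; apply: hnn.
move=> s t st td.
have sd : lt s d by apply: tr st td.
set n := nn t; set k := nn s; set m := maxn n k.
have htn : lt t (rho n) by apply: hnn.
have hsk : lt s (rho k) by apply: hnn.
have htm : lt t (rho m) by apply: rmon' htn; rewrite leq_maxl.
have -> : E n * e (rho n) t * e t s - E k * e (rho k) s =
   (- (E m * e (rho m) t - E n * e (rho n) t)) * e t s
   + E m * (e (rho m) t * e t s - e (rho m) s)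
   + (E m * e (rho m) s - E k * e (rho k) s) by ring.
apply: IsmD => //; [apply: IsmD => //|].
- rewrite mulrC; apply: IsmM => //; apply: IsmN => //.
  apply: Ism_dvd (dv _ _ st) _ => //; apply: key' htn; exact: leq_maxl.
- apply: IsmM => //; exact: coh st htm (rd _).
- apply: key' hsk; exact: leq_maxr.
Qed.
Theorem lemma4
  (R : idomainType) (O : Type) (lt : O -> O -> Prop)
  (A J : {fraction R} -> Prop) (r : O -> R) (d : O)
  (e : O -> O -> R) :
  valuation_domain R ->
  ~ (forall q : {fraction R}, exists a : R, q = emb a) ->
  omega1_order lt ->
  is_Rsubmodule A -> is_Rsubmodule J ->
  (forall x, A x -> J x) ->
  (forall nu, r nu != 0) ->
  (forall mu nu, lt mu nu -> dvdR (r mu) (r nu)) ->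
  (forall x, J x <-> exists nu (a : R), x = emb a / emb (r nu)) ->
  limit_ord lt d ->
  ~ complete_quot lt d r A ->
  (forall s t, lt s t -> lt t d -> e t s \is a GRing.unit) ->
  (forall s t p, lt s t -> lt t p -> lt p d ->
     smul (r s) A (emb (e p t * e t s - e p s))) ->
  exists ed : O -> bool -> R,
    (forall s j, lt s d -> ed s j \is a GRing.unit) /\
    (forall s t j, lt s t -> lt t d ->
       smul (r s) A (emb (ed t j * e t s - ed s j))) /\
    ~ (exists (c : O -> R) (cd : bool -> R),
         (forall s, lt s d -> c s \is a GRing.unit) /\
         (forall j, cd j \is a GRing.unit) /\
         (forall s t, lt s t -> lt t d ->
            smul (r s) A (emb (c t - e t s * c s))) /\
         (forall s j, lt s d ->
            smul (r s) A (emb (cd j - ed s j * c s)))).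
Proof.
move=> V _ o1 hA _ _ _ dv _ lim ninc eU coh.
have tr : forall x y z, lt x y -> lt y z -> lt x z by case: o1 => _ [].
have [ed0 [ed0U ed0C]] := extension hA o1 lim dv eU coh.
have [x [xc xnc]] : exists x, cauchy_seq lt d r A x /\ ~ exists l, converges_to lt d r A x l.
  apply: NNPP => H; apply: ninc => x hx; apply: NNPP => H2; apply: H; by exists x.
have [nu0 [nu0d n1]] : exists nu0, lt nu0 d /\ ~ Ism (r nu0) A 1.
  apply: NNPP => H; apply: xnc; exists 0 => nu nud; exists 0%N => n _.
  have h1 : Ism (r nu) A 1 by apply: NNPP => h; apply: H; exists nu.
  by rewrite -[x n - 0]mulr1; apply: IsmM.
have nonu : forall y, Ism (r nu0) A y -> y \isn't a GRing.unit.
  move=> y hy; apply/negP => yu; apply: n1; rewrite -(mulVr yu); exact: IsmM.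
have [N0 hN0] := xc nu0 nu0d.
have [k hk] : exists k : R, (x N0 + k) \is a GRing.unit.
  case: (unit_or_1 (x N0) V) => h; first by exists 0; rewrite addr0.
  by exists 1; rewrite addrC.
have : forall s, exists N, lt s d -> (N0 <= N)%N /\
    forall n m, (N <= n)%N -> (N <= m)%N -> Ism (r s) A (x n - x m).
  move=> s; case: (classic (lt s d)) => h; last by exists 0%N.
  have [N hN] := xc s h; exists (maxn N N0) => _; split; first exact: leq_maxr.
  move=> n m hn hm; apply: hN; [exact: leq_trans (leq_maxl N N0) hn|exact: leq_trans (leq_maxl N N0) hm].
move=> /choice_fun [M hM].
pose u s := x (M s) + k.
have uU : forall s, lt s d -> u s \is a GRing.unit.
  move=> s sd; apply: (unit_shift V hk); apply: nonu.
  have -> : u s - (x N0 + k) = x (M s) - x N0 by rewrite /u; ring.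
  by apply: hN0 => //; case: (hM s sd).
have uC : forall s t, lt s t -> lt t d -> Ism (r s) A (u t - u s).
  move=> s t st td; have sd := tr _ _ _ st td.
  have -> : u t - u s = x (M t) - x (M s) by rewrite /u; ring.
  case: (leqP (M s) (M t)) => h.
    by case: (hM s sd) => _ H; apply: H.
  apply: Ism_dvd (dv _ _ st) _ => //; case: (hM t td) => _ H; apply: H => //.
  exact: ltnW.
exists (fun s (j : bool) => if j then ed0 s * u s else ed0 s); split.
  by move=> s [] sd /=; rewrite ?unitrM ed0U ?uU.
split.
  move=> s t [] st td /=; last exact: ed0C.
  have -> : ed0 t * u t * e t s - ed0 s * u s =
    u t * (ed0 t * e t s - ed0 s) + ed0 s * (u t - u s) by ring.
  apply: IsmD => //; apply: IsmM => //; [exact: ed0C| exact: uC].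
move=> [c [cd [_ [cdU [_ hcd]]]]].
apply: xnc; exists (cd true * (cd false)^-1 - k) => nu nud.
exists (M nu) => n hn.
have -> : x n - (cd true * (cd false)^-1 - k) =
   (x n - x (M nu)) + (u nu - cd true * (cd false)^-1) by rewrite /u; ring.
apply: IsmD => //.
  by case: (hM nu nud) => _ H; apply: H.
have -> : u nu - cd true * (cd false)^-1 = (- (cd false)^-1) *
   ((cd true - ed0 nu * u nu * c nu) - u nu * (cd false - ed0 nu * c nu)).
  rewrite [RHS](_ : _ = u nu * ((cd false)^-1 * cd false) - cd true * (cd false)^-1); last by ring.
  by rewrite mulVr // mulr1.
apply: IsmM => //; apply: IsmB => //; [exact: (hcd nu true) | apply: IsmM => //; exact: (hcd nu false)].
Qed.
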